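(* Let $E\colon(0,1]\to\mathbb{R}$ be given by $E(\delta):=\big((\lfloor\delta^{-1}\rfloor+1)\delta-1\big)\log\lfloor\delta^{-1}\rfloor+\big(1-\lfloor\delta^{-1}\rfloor\delta\big)\log\big(\lfloor\delta^{-1}\rfloor+1\big)$ (base-2 logarithms, so $E(1)=0$). For every real $a\ge 0$ and every integer $t\ge 3$, the maximum of $E(\delta)-a\delta$ over $\delta\in[1/t,1]$ is attained at $\delta=1/s$ for some $s\in\{3,4,\dots,t\}$.
   Context: Logarithms are base 2. *)

(* Defs.v *)
From Stdlib Require Import Reals Lra Lia ZArith.
Open Scope R_scope.

Definition log2 (x : R) : R := ln x / ln 2.

Definition floorR (x : R) : R := IZR (Int_part x).

Definition E (d : R) : R :=
  let m := floorR (/ d) in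
  ((m + 1) * d - 1) * log2 m + (1 - m * d) * log2 (m + 1).

(* Main.v *)
Require Import Defs.
From Stdlib Require Import Reals Lra Lia ZArith Psatz.
Open Scope R_scope.

Lemma argmax_nat (g : nat -> R) (t : nat) : (3 <= t)%nat ->
  exists s, (3 <= s)%nat /\ (s <= t)%nat /\
   forall k, (3 <= k)%nat -> (k <= t)%nat -> g k <= g s.
Proof.
  induction t as [|t IH]; intros Ht; [lia|].
  destruct (Nat.eq_dec t 2) as [->|Hne].
  - exists 3%nat; repeat split; try lia. intros k H1 H2.
    assert (k = 3%nat) by lia. subst; lra.
  - destruct IH as [s [H1 [H2 H3]]]; [lia|].
    destruct (Rle_dec (g (S t)) (g s)).
    + exists s; repeat split; try lia. intros k K1 K2.
      destruct (Nat.eq_dec k (S t)) as [->|]; [lra|apply H3; lia].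
    + exists (S t); repeat split; try lia. intros k K1 K2.
      destruct (Nat.eq_dec k (S t)) as [->|]; [lra|].
      specialize (H3 k K1 ltac:(lia)); lra.
Qed.

Lemma Int_part_eq (r : R) (z : Z) : IZR z <= r -> r < IZR z + 1 -> Int_part r = z.
Proof.
  intros H1 H2. unfold Int_part.
  rewrite <- (up_tech r z H1); [lia|]. rewrite plus_IZR; simpl; lra.
Qed.

Lemma E_inv (s : nat) : (1 <= s)%nat ->
  E (/ INR s) = log2 (INR s) / INR s.
Proof.
  intros Hs. assert (Hp : 0 < INR s) by (apply lt_0_INR; lia).
  unfold E, floorR. rewrite Rinv_inv.
  rewrite (Int_part_eq (INR s) (Z.of_nat s)); rewrite <- INR_IZR_INZ; try lra.
  field; lra.
Qed.

Lemma log2_3 : 3 / 2 < log2 3.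
Proof.
  unfold log2. assert (H2 : 0 < ln 2) by (pose proof ln_lt_2; lra).
  apply Rmult_lt_reg_r with (ln 2); auto.
  replace (ln 3 / ln 2 * ln 2) with (ln 3) by (field; lra).
  assert (ln 8 < ln 9) by (apply ln_increasing; lra).
  replace 8 with (2*2*2) in H by lra. replace 9 with (3*3) in H by lra.
  rewrite !ln_mult in H by lra. lra.
Qed.

Theorem corollary1 (a : R) (t : nat) :
  0 <= a -> (3 <= t)%nat ->
  exists s : nat, (3 <= s)%nat /\ (s <= t)%nat /\
    forall d : R, / INR t <= d <= 1 ->
      E d - a * d <= E (/ INR s) - a * / INR s.
Proof.
  intros Ha Ht.
  set (g := fun k : nat => (log2 (INR k) - a) / INR k).
  destruct (argmax_nat g t Ht) as [s [Hs1 [Hs2 Hs3]]].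
  exists s; repeat split; auto.
  assert (Hg3 : g 1%nat < g 3%nat /\ g 2%nat < g 3%nat).
  { pose proof log2_3. unfold g. simpl.
    replace (1+1+1) with 3 by lra. replace (1+1) with 2 by lra.
    assert (log2 1 = 0) by (unfold log2; rewrite ln_1; lra).
    assert (log2 2 = 1) by (unfold log2; field; assert (0 < ln 2) by (pose proof ln_lt_2; lra); lra).
    rewrite H0, H1. split; apply Rminus_gt_0_lt;
    [replace ((log2 3 - a) / 3 - (0 - a) / 1) with (log2 3 / 3 + 2 * a / 3) by field
    |replace ((log2 3 - a) / 3 - (1 - a) / 2) with ((log2 3 - 3/2) / 3 + a / 6) by field]; lra. }
  assert (HG : forall k, (1 <= k)%nat -> (k <= t)%nat -> g k <= g s).
  { intros k K1 K2. destruct (le_lt_dec 3 k). apply Hs3; lia.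
    assert (g 3%nat <= g s) by (apply Hs3; lia).
    destruct k as [|[|[|k]]]; try lia; lra. }
  assert (Hts : 0 < INR s) by (apply lt_0_INR; lia).
  assert (Hgs : E (/ INR s) - a * / INR s = g s).
  { rewrite E_inv by lia. unfold g. field. lra. }
  rewrite Hgs.
  intros d [Hd1 Hd2].
  assert (Htp : 0 < INR t) by (apply lt_0_INR; lia).
  assert (Hdp : 0 < d) by (apply Rlt_le_trans with (/ INR t); auto; apply Rinv_0_lt_compat; lra).
  pose proof (base_Int_part (/ d)) as [B1 B2].
  assert (Hid : 1 <= / d).
  { rewrite <- Rinv_1. apply Rinv_le_contravar; lra. }
  assert (Hz : (0 <= Int_part (/ d))%Z).
  { apply le_IZR. lra. }
  set (m := Z.to_nat (Int_part (/ d))).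
  assert (Hm : IZR (Int_part (/ d)) = INR m).
  { unfold m. rewrite INR_IZR_INZ, Z2Nat.id; auto. }
  rewrite Hm in B1, B2.
  assert (Hm1 : (1 <= m)%nat).
  { destruct m as [|m']; [simpl in B2; lra | lia]. }
  assert (Hitd : / d <= INR t).
  { rewrite <- (Rinv_inv (INR t)). apply Rinv_le_contravar; auto. apply Rinv_0_lt_compat; lra. }
  assert (Hmt : (m <= t)%nat) by (apply INR_le; lra).
  assert (Hmp : 1 <= INR m) by (apply (le_INR 1); lia).
  assert (Hmd : INR m * d <= 1).
  { apply Rmult_le_reg_r with (/ d). apply Rinv_0_lt_compat; lra.
    rewrite Rmult_assoc, Rinv_r by lra. lra. }
  assert (Hmd2 : 1 < (INR m + 1) * d).
  { apply Rmult_lt_reg_r with (/ d). apply Rinv_0_lt_compat; lra.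
    rewrite Rmult_assoc, Rinv_r by lra. lra. }
  assert (Ltd : 1 <= INR t * d).
  { apply Rmult_le_reg_r with (/ d). apply Rinv_0_lt_compat; lra.
    rewrite Rmult_assoc, Rinv_r by lra. lra. }
  assert (Lm : log2 (INR m) = INR m * g m + a) by (unfold g; field; lra).
  assert (Lm1 : log2 (INR m + 1) = (INR m + 1) * g (S m) + a).
  { unfold g. rewrite S_INR. field; lra. }
  unfold E, floorR. rewrite Hm, Lm, Lm1.
  assert (Gm : g m <= g s) by (apply HG; lia).
  set (x := INR m) in *.
  assert (Hsum : ((x+1)*d - 1) * x + (1 - x*d) * (x+1) = 1) by ring.
  assert (P1 : 0 <= ((x+1)*d - 1) * x * (g s - g m)).
  { apply Rmult_le_pos; [apply Rmult_le_pos|]; lra. }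
  assert (P2 : 0 <= (1 - x*d) * (x+1) * (g s - g (S m))).
  { destruct (Nat.eq_dec m t) as [Heq|Hne].
    - assert (Hb : 1 - x * d = 0).
      { assert (Hx : x = INR t) by (unfold x; rewrite Heq; auto).
        rewrite Hx in Hmd |- *. lra. }
      rewrite Hb. lra.
    - assert (Gm1 : g (S m) <= g s) by (apply HG; lia).
      apply Rmult_le_pos; [apply Rmult_le_pos|]; lra. }
  replace (((x + 1) * d - 1) * (x * g m + a) + (1 - x * d) * ((x + 1) * g (S m) + a) - a * d)
    with (g s * (((x+1)*d - 1) * x + (1 - x*d) * (x+1))
          - ((x+1)*d - 1) * x * (g s - g m) - (1 - x*d) * (x+1) * (g s - g (S m))) by ring.
  rewrite Hsum. lra.
Qed.
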